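(* Consider Algorithm 1 (described in the context) run on a strongly connected digraph $\mathcal{G}_d$ with edge bounds $l_{ji},u_{ji}$, under any realization of transmission delays bounded by $\overline{\tau}<\infty$. Then for all $k\ge0$, $0\le\varepsilon[k+1]\le\varepsilon[k]$.
   Context: Setting: $\mathcal{G}_d=(\mathcal{V},\mathcal{E})$ is a strongly connected digraph, $\mathcal{V}=\{v_1,\dots,v_n\}$, $n\ge2$; an edge $(v_j,v_i)$ carries flow from $v_i$ to $v_j$. $\mathcal{N}_j^-=\{v_i:(v_j,v_i)\in\mathcal{E}\}$, $\mathcal{N}_j^+=\{v_l:(v_l,v_j)\in\mathcal{E}\}$, $\mathcal{D}_j=|\mathcal{N}_j^-|+|\mathcal{N}_j^+|$. Each edge has real bounds $1\le l_{ji}\le u_{ji}$. Communication is bidirectional along every edge. Projection: $[x]_{ji}=\max\{\lceil l_{ji}\rceil,\min\{\lfloor u_{ji}\rfloor,x\}\}$. State: for each edge $(v_l,v_j)$, the tail $v_j$ holds the actual flow $f_{lj}[k]$; for each edge $(v_j,v_i)$, the head $v_j$ holds a perceived flow $f^{(p)}_{ji}[k]$. Actual balance $b_j[k]=\sum_{v_i\in\mathcal{N}_j^-}f_{ji}[k]-\sum_{v_l\in\mathcal{N}_j^+}f_{lj}[k]$; perceived balance $b^{(p)}_j[k]=\sum_{v_i\in\mathcal{N}_j^-}f^{(p)}_{ji}[k]-\sum_{v_l\in\mathcal{N}_j^+}f_{lj}[k]$; total imbalance $\varepsilon[k]=\sum_j|b_j[k]|$. Algorithm 1. Initialization: $f_{ji}[0]=f^{(p)}_{ji}[0]=\lceil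 l_{ji}\rceil$ for all edges; each $v_j$ fixes a cyclic order of its $\mathcal{D}_j$ incident (incoming and outgoing) edges and a pointer into it. Iteration $k=0,1,2,\dots$, at each node $v_j$: (1) compute $b^{(p)}_j[k]$. (2) If $b^{(p)}_j[k]>0$, starting at the pointer and cycling through the order, visit edges one at a time: at an outgoing edge $(v_l,v_j)$, if $f_{lj}[k]+c^{(j)}_{lj}[k]<\lfloor u_{lj}\rfloor$ add $1$ to $c^{(j)}_{lj}[k]$; at an incoming edge $(v_j,v_i)$, if $f^{(p)}_{ji}[k]+c^{(j)}_{ji}[k]>\lceil l_{ji}\rceil$ subtract $1$ from $c^{(j)}_{ji}[k]$ (the $c$'s start at $0$; edges at their limit are skipped); stop as soon as the total number of unit changes equals $b^{(p)}_j[k]$, leaving the pointer at the next edge. If $b^{(p)}_j[k]\le 0$, all $c^{(j)}[k]=0$. (3) $v_j$ transmits $c^{(j)}_{lj}[k]$ to each out-neighbor $v_l$ and $c^{(j)}_{ji}[k]$ to each in-neighbor $v_i$. A message sent at step $k$ over a link in a given direction is delivered at step $k+\tau$, where the integer $\tau\in[0,\overline{\tau}]$ is arbitrary (unknown, time-varying, independent across links and directions). (4) $v_j$ forms $\overline{c}^{(l)}_{lj}[k]$ (resp. $\overline{c}^{(i)}_{ji}[k]$) as the sum of all values $c^{(l)}_{lj}[k_0]$ (resp. $c^{(i)}_{ji}[k_0]$) sent by $v_l$ (resp. $v_i$) that are delivered at step $k$ (zero if none). (5)–(6) $f_{lj}[k+1]=[f_{lj}[k]+c^{(j)}_{lj}[k]+\overline{c}^{(l)}_{lj}[k]]_{lj}$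 and $f^{(p)}_{ji}[k+1]=[f^{(p)}_{ji}[k]+c^{(j)}_{ji}[k]+\overline{c}^{(i)}_{ji}[k]]_{ji}$. *)

(* Defs.v *)
From HB Require Import structures.
From mathcomp Require Import all_boot all_order all_algebra.
Set Implicit Arguments. Unset Strict Implicit. Unset Printing Implicit Defensive.
Import Order.TTheory GRing.Theory Num.Theory.
Local Open Scope ring_scope.

(* E : rel V, and [E j i] means the edge (v_j, v_i),
     carrying flow from v_i to v_j (tail v_i, head v_j).
   - Flows are integer valued; [f a b] is the actual flow on edge (v_a, v_b)
     (held by the tail b), [fp a b] the perceived flow on edge (v_a, v_b)
     (held by the head a).  Values off edges are irrelevant.
   - The incident edges of node j are encoded in V + V:
       inl i  = incoming edge (v_j, v_i)   (v_i in N_j^-)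
       inr l  = outgoing edge (v_l, v_j)   (v_l in N_j^+). *)

Section Alg.
Variables (R : archiRealFieldType) (V : finType) (E : rel V) (lo up : V -> V -> R).

Definition lceil (a b : V) : int := Num.ceil (lo a b).
Definition ufloor (a b : V) : int := Num.floor (up a b).

Definition proj (a b : V) (x : int) : int :=
  Order.max (lceil a b) (Order.min (ufloor a b) x).

Definition incident (j : V) (x : V + V) : bool :=
  match x with inl i => E j i | inr l => E l j end.

Definition balance (f : V -> V -> int) (j : V) : int :=
  \sum_(i | E j i) f j i - \sum_(l | E l j) f l j.

Definition pbalance (f fp : V -> V -> int) (j : V) : int :=
  \sum_(i | E j i) fp j i - \sum_(l | E l j) f l j.

Definition imbalance (f : V -> V -> int) : int :=
  \sum_(j : V) `|balance f j|.

Definition upd (c : V + V -> int) (e : V + V) (v : int) : V + V -> int :=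
  fun x => if x == e then v else c x.

(* One visit of step (2) at node j: state = (c, number of unit changes, pointer). *)
Definition visit (f fp : V -> V -> int) (j : V) (s : seq (V + V))
    (st : (V + V -> int) * nat * nat) : (V + V -> int) * nat * nat :=
  let: (c, cnt, p) := st in
  if (cnt%:Z >= pbalance f fp j) then st else
  let e := nth (inl j) s p in
  let p' := (p.+1 %% size s)%N in
  match e with
  | inr l => if f l j + c e < ufloor l j
             then (upd c e (c e + 1), cnt.+1, p') else (c, cnt, p')
  | inl i => if fp j i + c e > lceil j i
             then (upd c e (c e - 1), cnt.+1, p') else (c, cnt, p')
  end.

(* Step (2) at node j: returns (c^{(j)}[k], number of changes, new pointer).
   The visiting loop stops as soon as b^{(p)}_j[k] unit changes have been made;
   it is run for at most b^{(p)}_j[k] * D_j visits, which suffices to reach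
   b^{(p)}_j[k] changes whenever this is possible at all (otherwise every
   incident edge is at its limit and no further change can occur). *)
Definition alloc (f fp : V -> V -> int) (s : seq (V + V)) (j : V) (p : nat)
    : (V + V -> int) * nat * nat :=
  let bp := pbalance f fp j in
  if 0 < bp then iter (`|bp|%N * size s)%N (visit f fp j s) (fun _ => 0, 0%N, p)
  else (fun _ => 0, 0%N, p).

End Alg.

(* Main.v *)
Require Import Defs.
From HB Require Import structures.
From mathcomp Require Import all_boot all_order all_algebra zify ring.
Import Order.TTheory GRing.Theory Num.Theory.
Set Implicit Arguments. Unset Strict Implicit.
Local Open Scope ring_scope.

Lemma proj_ge_lc (R : archiRealFieldType) (V : finType) (lo up : V -> V -> R) a b x :
  lceil lo a b <= proj lo up a b x.
Proof. rewrite /proj; lia. Qed.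

Lemma proj_le_M (R : archiRealFieldType) (V : finType) (lo up : V -> V -> R) a b x :
  proj lo up a b x <= Order.max (lceil lo a b) (ufloor up a b).
Proof. rewrite /proj; lia. Qed.

Lemma proj_ge (R : archiRealFieldType) (V : finType) (lo up : V -> V -> R) a b z w :
  w <= z -> w <= Order.max (lceil lo a b) (ufloor up a b) -> w <= proj lo up a b z.
Proof. rewrite /proj; lia. Qed.

Lemma proj_le (R : archiRealFieldType) (V : finType) (lo up : V -> V -> R) a b z w :
  z <= w -> lceil lo a b <= w -> proj lo up a b z <= w.
Proof. rewrite /proj; lia. Qed.

Definition scv (V : finType) (E : rel V) (j : V) (c : V + V -> int) : int :=
  \sum_(l | E l j) c (inr l) - \sum_(i | E j i) c (inl i).

Lemma scv_updr (V : finType) (E : rel V) j c l0 v : E l0 j ->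
  scv E j (upd c (inr l0) v) = scv E j c - c (inr l0) + v.
Proof.
move=> hl; rewrite /scv (bigD1 l0) //= [in RHS](bigD1 l0) //= /upd eqxx.
rewrite (eq_bigr (fun i => c (inr i))); last first.
  by move=> i /andP[_ hi]; case: eqP => // -[] /eqP; rewrite (negbTE hi).
rewrite [X in _ - X](eq_bigr (fun i => c (inl i))) //; first lia.


Qed.

Lemma scv_updl (V : finType) (E : rel V) j c i0 v : E j i0 ->
  scv E j (upd c (inl i0) v) = scv E j c + c (inl i0) - v.
Proof.
move=> hl; rewrite /scv.
rewrite [X in _ = _ - X + _ - _](bigD1 i0) //= [X in _ - X = _](bigD1 i0) //= /upd eqxx.
have -> : \sum_(i | E j i && (i != i0)) (if (inl i : V + V) == inl i0 then v else c (inl i))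
   = \sum_(i | E j i && (i != i0)) c (inl i) :> int.
  by apply: eq_bigr => i /andP[_ hi]; case: eqP => // -[] /eqP; rewrite (negbTE hi).
rewrite (eq_bigr (fun i => c (inr i))) //; ring.
Qed.

Definition ainv (R : archiRealFieldType) (V : finType) (E : rel V) (lo up : V -> V -> R)
  (f fp : V -> V -> int) (s : seq (V + V)) (j : V) (st : (V + V -> int) * nat * nat) : Prop :=
  let: (c, cnt, q) := st in
  [/\ (q < size s)%N,
      (forall l, 0 <= c (inr l)) /\ (forall i, c (inl i) <= 0),
      (forall l, c (inr l) = 0 \/ f l j + c (inr l) <= ufloor up l j),
      (forall i, c (inl i) = 0 \/ lceil lo j i <= fp j i + c (inl i))
    & scv E j c = cnt%:Z /\ cnt%:Z <= pbalance E f fp j].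

Lemma visit_inv (R : archiRealFieldType) (V : finType) (E : rel V) (lo up : V -> V -> R)
  (f fp : V -> V -> int) (s : seq (V + V)) (j : V) st :
  (forall x, (x \in s) = incident E j x) ->
  ainv E lo up f fp s j st -> ainv E lo up f fp s j (visit E lo up f fp j s st).
Proof.
move=> hmem; case: st => [[c cnt] q] [hq [hr hl] hbr hbl [hsc hcnt]] /=.
case: ifP => hge; first by [].
have hsz : (0 < size s)%N by case: (size s) hq.
have hq' : (q.+1 %% size s < size s)%N by rewrite ltn_mod.
have hin : nth (inl j) s q \in s by rewrite mem_nth.
rewrite hmem in hin.
case he: (nth (inl j) s q) hin => [i|l] /= hE.
- case: ifP => hlt; last by split.
  have h1 : forall l, 0 <= upd c (inl i) (c (inl i) - 1) (inr l) by move=> l; rewrite /upd /=; apply: hr.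
  have h2 : forall i', upd c (inl i) (c (inl i) - 1) (inl i') <= 0.
    move=> i'; rewrite /upd; case: eqP => [[?]|_]; [subst; have := hl i; lia | exact: hl].
  have h3 : forall l, upd c (inl i) (c (inl i) - 1) (inr l) = 0 \/ f l j + upd c (inl i) (c (inl i) - 1) (inr l) <= ufloor up l j.
    by move=> l; rewrite /upd /=; apply: hbr.
  have h4 : forall i', upd c (inl i) (c (inl i) - 1) (inl i') = 0 \/ lceil lo j i' <= fp j i' + upd c (inl i) (c (inl i) - 1) (inl i').
    move=> i'; rewrite /upd; case: eqP => [[?]|_]; [subst; right; lia | exact: hbl].
  split => //; split => //; rewrite ?scv_updl // ?hsc; lia.
- case: ifP => hlt; last by split.
  have h1 : forall l', 0 <= upd c (inr l) (c (inr l) + 1) (inr l').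
    move=> l'; rewrite /upd; case: eqP => [[?]|_]; [subst; have := hr l; lia | exact: hr].
  have h2 : forall i', upd c (inr l) (c (inr l) + 1) (inl i') <= 0 by move=> i'; rewrite /upd /=; apply: hl.
  have h3 : forall l', upd c (inr l) (c (inr l) + 1) (inr l') = 0 \/ f l' j + upd c (inr l) (c (inr l) + 1) (inr l') <= ufloor up l' j.
    move=> l'; rewrite /upd; case: eqP => [[?]|_]; [subst; right; lia | exact: hbr].
  have h4 : forall i', upd c (inr l) (c (inr l) + 1) (inl i') = 0 \/ lceil lo j i' <= fp j i' + upd c (inr l) (c (inr l) + 1) (inl i').
    by move=> i'; rewrite /upd /=; apply: hbl.
  split => //; split => //; rewrite ?scv_updr // ?hsc; lia.
Qed.

Lemma alloc_spec (R : archiRealFieldType) (V : finType) (E : rel V) (lo up : V -> V -> R)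
  (f fp : V -> V -> int) (s : seq (V + V)) (j : V) (p : nat) :
  (p < size s)%N -> (forall x, (x \in s) = incident E j x) ->
  let r := alloc E lo up f fp s j p in
  [/\ (r.2 < size s)%N,
      (forall l, 0 <= r.1.1 (inr l)) /\ (forall i, r.1.1 (inl i) <= 0),
      (forall l, r.1.1 (inr l) = 0 \/ f l j + r.1.1 (inr l) <= ufloor up l j),
      (forall i, r.1.1 (inl i) = 0 \/ lceil lo j i <= fp j i + r.1.1 (inl i))
    & (0 < pbalance E f fp j -> scv E j r.1.1 <= pbalance E f fp j) /\
      (~~ (0 < pbalance E f fp j) -> forall x, r.1.1 x = 0)].
Proof.
move=> hp hmem /=; rewrite /alloc; case: ifP => hb; last first.
  split => //=; try (by move=> *; left); try (by split; [rewrite hb|]).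
have : ainv E lo up f fp s j
   (iter (`|pbalance E f fp j|%N * size s) (visit E lo up f fp j s) (fun=> 0, 0%N, p)).
  elim: (_ * _)%N => [|n IH] /=; last exact: visit_inv.
  split => //; try (by move=> *; left); split => //; try (by rewrite /scv !big1); lia.
case: (iter _ _ _) => [[c cnt] q]; rewrite /ainv /= => -[hq hsg hbr hbl [hsc hcnt]].
split => //; split => //; try (move=> _; lia); by rewrite hb.
Qed.

Ltac gensums := repeat match goal with |- context [@bigop.body ?R ?I ?idx ?r ?F] =>
  generalize (@bigop.body R I idx r F); intro end.

Lemma sumD_int (I : finType) (P : pred I) (F G : I -> int) :
  \sum_(i | P i) (F i + G i) = \sum_(i | P i) F i + \sum_(i | P i) G i.
Proof. by rewrite big_split. Qed.

Lemma sum_decomp (I : finType) (P : pred I) (F G : I -> int) :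
  \sum_(i | P i) G i = \sum_(i | P i) F i + \sum_(i | P i) Order.max (G i - F i) 0
     - \sum_(i | P i) Order.max (F i - G i) 0.
Proof. rewrite -sumD_int -sumrB; apply: eq_bigr => i _; lia. Qed.

Lemma pend_rec (g : nat -> int) (d : nat -> nat) k :
  \sum_(k0 < k.+1 | (k.+1 <= k0 + d k0)%N) g k0 + \sum_(k0 < k.+1 | (k0 + d k0)%N == k) g k0
  = \sum_(k0 < k | (k <= k0 + d k0)%N) g k0 + g k.
Proof.
rewrite (big_mkcond (fun k0 : 'I_k.+1 => (k.+1 <= k0 + d k0)%N)).
rewrite (big_mkcond (fun k0 : 'I_k.+1 => (k0 + d k0)%N == k)).
rewrite -big_split big_ord_recr /= big_mkcond /=.
congr (_ + _).
  rewrite [RHS]big_mkcond; apply: eq_bigr => i _ /=.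
  have hi := ltn_ord i.
  case h1: (k < i + d i)%N; case h2: ((i + d i)%N == k); case h3: (k <= i + d i)%N;
    rewrite /= ?addr0 ?add0r //; exfalso; move: h1 h2 h3; rewrite ?eqn_leq; lia.
case: (posnP (d k)) => h.
  by rewrite h addn0 eqxx ltnn add0r.
rewrite (_ : ((k + d k)%N == k) = false) ?addr0; last by apply/eqP; lia.
by rewrite (_ : (k < k + d k)%N = true) //; lia.
Qed.

Lemma exch (V : finType) (E : rel V) (g : V -> V -> int) :
  \sum_j \sum_(i | E j i) g j i = \sum_j \sum_(l | E l j) g l j.
Proof.
rewrite [RHS](eq_bigr (fun j => \sum_l (if E l j then g l j else 0))); last by move=> j _; rewrite big_mkcond.
rewrite [RHS]exchange_big /=.
by apply: eq_bigr => j _; rewrite big_mkcond.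
Qed.
Theorem proposition3
  (R : archiRealFieldType) (V : finType) (E : rel V) (lo up : V -> V -> R)
  (* n >= 2, strongly connected digraph *)
  (Hn : (1 < #|V|)%N)
  (Hsc : forall x y : V, connect E x y) (Hirr : irreflexive E)
  (* edge bounds 1 <= l_ji <= u_ji *)
  (Hbnd : forall j i : V, E j i -> 1 <= lo j i /\ lo j i <= up j i)
  (* cyclic orders of incident edges and initial pointers *)
  (ord : V -> seq (V + V)) (Hord_uniq : forall j, uniq (ord j))
  (Hord_mem : forall j x, (x \in ord j) = incident E j x)
  (* delays: dH k j i = delay of the message sent at step k by the tail v_i to
     the head v_j about edge (v_j,v_i); dT k j i = delay of the message sent at
     step k by the head v_j to the tail v_i about edge (v_j,v_i) *)
  (taubar : nat) (dH dT : nat -> V -> V -> nat)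
  (HdH : forall k j i, (dH k j i <= taubar)%N)
  (HdT : forall k j i, (dT k j i <= taubar)%N)
  (* the execution: actual flows, perceived flows, pointers *)
  (f fp : nat -> V -> V -> int) (ptr : nat -> V -> nat)
  (Hinit : forall j i, E j i -> f 0%N j i = lceil lo j i /\ fp 0%N j i = lceil lo j i)
  (Hptr0 : forall j, (ptr 0%N j < size (ord j))%N)
  (Hptr : forall k j,
     ptr k.+1 j = (alloc E lo up (f k) (fp k) (ord j) j (ptr k j)).2)
  (Hf : forall k l j, E l j ->
     f k.+1 l j =
       proj lo up l j
         (f k l j + (alloc E lo up (f k) (fp k) (ord j) j (ptr k j)).1.1 (inr l)
          + \sum_(k0 < k.+1 | (k0 + dT k0 l j)%N == k)
              (alloc E lo up (f k0) (fp k0) (ord l) l (ptr k0 l)).1.1 (inl j)))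
  (Hfp : forall k j i, E j i ->
     fp k.+1 j i =
       proj lo up j i
         (fp k j i + (alloc E lo up (f k) (fp k) (ord j) j (ptr k j)).1.1 (inl i)
          + \sum_(k0 < k.+1 | (k0 + dH k0 j i)%N == k)
              (alloc E lo up (f k0) (fp k0) (ord i) i (ptr k0 i)).1.1 (inr j))) :
  forall k : nat, 0 <= imbalance E (f k.+1) <= imbalance E (f k).
Proof.
pose C k j := (alloc E lo up (f k) (fp k) (ord j) j (ptr k j)).1.1.
have Hp : forall k j, (ptr k j < size (ord j))%N.
  elim=> [|k IH] j; first exact: Hptr0.
  rewrite Hptr.
  by have [] := @alloc_spec R V E lo up (f k) (fp k) (ord j) j (ptr k j) (IH j) (Hord_mem j).
have AS k j := @alloc_spec R V E lo up (f k) (fp k) (ord j) j (ptr k j) (Hp k j) (Hord_mem j).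
have Cr : forall k j l, 0 <= C k j (inr l).
  by move=> k j l; have [_ [h _] _ _ _] := AS k j; apply: h.
have Cl : forall k j i, C k j (inl i) <= 0.
  by move=> k j i; have [_ [_ h] _ _ _] := AS k j; apply: h.
have Cbr : forall k j l, C k j (inr l) = 0 \/ f k l j + C k j (inr l) <= ufloor up l j.
  by move=> k j l; have [_ _ h _ _] := AS k j; apply: h.
have Cbl : forall k j i, C k j (inl i) = 0 \/ lceil lo j i <= fp k j i + C k j (inl i).
  by move=> k j i; have [_ _ _ h _] := AS k j; apply: h.
have Csc : forall k j, 0 < pbalance E (f k) (fp k) j -> scv E j (C k j) <= pbalance E (f k) (fp k) j.
  by move=> k j; have [_ _ _ _ [h _]] := AS k j; apply: h.
have C0 : forall k j, ~~ (0 < pbalance E (f k) (fp k) j) -> forall x, C k j x = 0.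
  by move=> k j; have [_ _ _ _ [_ h]] := AS k j; apply: h.
have Hf' : forall k l j, E l j -> f k.+1 l j = proj lo up l j
   (f k l j + C k j (inr l) + \sum_(k0 < k.+1 | (k0 + dT k0 l j)%N == k) C k0 l (inl j)) := Hf.
have Hfp' : forall k j i, E j i -> fp k.+1 j i = proj lo up j i
   (fp k j i + C k j (inl i) + \sum_(k0 < k.+1 | (k0 + dH k0 j i)%N == k) C k0 i (inr j)) := Hfp.
clear Hf Hfp.
pose M a b := Order.max (lceil lo a b) (ufloor up a b).
have Hb : forall k a b, E a b -> (lceil lo a b <= f k a b <= M a b) && (lceil lo a b <= fp k a b <= M a b).
  case=> [|k] a b hab.
    have [-> ->] := Hinit a b hab; rewrite /M; apply/andP; split; lia.
  rewrite Hf' // Hfp' //; rewrite !proj_ge_lc !proj_le_M.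
  done.
have SD : forall k a b, \sum_(k0 < k.+1 | (k0 + dT k0 a b)%N == k) C k0 a (inl b) <= 0.
  by move=> k a b; apply: sumr_le0 => k0 _; apply: Cl.
have SI : forall k a b, 0 <= \sum_(k0 < k.+1 | (k0 + dH k0 a b)%N == k) C k0 b (inr a).
  by move=> k a b; apply: sumr_ge0 => k0 _; apply: Cr.
have Hbp : forall k j, 0 <= pbalance E (f k) (fp k) j -> 0 <= pbalance E (f k.+1) (fp k.+1) j.
  move=> k j h0.
  have key : pbalance E (f k) (fp k) j - scv E j (C k j) <= pbalance E (f k.+1) (fp k.+1) j.
    rewrite /pbalance /scv.
    have h1 : \sum_(i | E j i) (fp k j i + C k j (inl i)) <= \sum_(i | E j i) fp k.+1 j i.
      apply: ler_sum => i hi; rewrite Hfp' //; apply: proj_ge.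
        have := SI k j i; lia.
      have := Hb k j i hi; have := Cl k j i; rewrite /M; lia.
    have h2 : \sum_(l | E l j) f k.+1 l j <= \sum_(l | E l j) (f k l j + C k j (inr l)).
      apply: ler_sum => l hl; rewrite Hf' //; apply: proj_le.
        have := SD k l j; lia.
      have := Hb k l j hl; have := Cr k j l; lia.
    rewrite !sumD_int in h1 h2; lia.
  case: (ltrP 0 (pbalance E (f k) (fp k) j)) => hp.
    have := Csc k j hp; lia.
  have hz : scv E j (C k j) = 0.
    by rewrite /scv !big1 // => *; apply: C0; lia.
  lia.
have Hpers : forall k0 m j, 0 <= pbalance E (f k0) (fp k0) j -> 0 <= pbalance E (f (k0 + m)%N) (fp (k0 + m)%N) j.
  move=> k0; elim=> [|m IH] j h; first by rewrite addn0.
  by rewrite addnS; apply: Hbp; apply: IH.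
have Hneg : forall k j, pbalance E (f k) (fp k) j < 0 -> forall k0, (k0 <= k)%N -> forall x, C k0 j x = 0.
  move=> k j hk k0 hk0 x; apply: C0; apply/negP => hp.
  have := Hpers k0 (k - k0)%N j (ltW hp); rewrite subnKC //; lia.
pose PD k j i := \sum_(k0 < k | (k <= k0 + dT k0 j i)%N) - C k0 j (inl i).
pose PI k j i := \sum_(k0 < k | (k <= k0 + dH k0 j i)%N) C k0 i (inr j).
have PDge : forall k j i, 0 <= PD k j i.
  by move=> k j i; apply: sumr_ge0 => k0 _; have := Cl k0 j i; lia.
have PIge : forall k j i, 0 <= PI k j i.
  by move=> k j i; apply: sumr_ge0 => k0 _; apply: Cr.
have PDrec : forall k j i, PD k.+1 j i - \sum_(k0 < k.+1 | (k0 + dT k0 j i)%N == k) C k0 j (inl i)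
    = PD k j i - C k j (inl i).
  move=> k j i; have := pend_rec (fun k0 => - C k0 j (inl i)) (fun k0 => dT k0 j i) k.
  rewrite /PD /= !sumrN; exact.
have PIrec : forall k j i, PI k.+1 j i + \sum_(k0 < k.+1 | (k0 + dH k0 j i)%N == k) C k0 i (inr j)
    = PI k j i + C k i (inr j).
  move=> k j i; have := pend_rec (fun k0 => C k0 i (inr j)) (fun k0 => dH k0 j i) k.
  rewrite /PI /=; exact.
have E1 : forall k j i, E j i -> f k j i + C k i (inr j) + \sum_(k0 < k.+1 | (k0 + dT k0 j i)%N == k) C k0 j (inl i)
      <= f k.+1 j i.
  move=> k j i hji; rewrite Hf' //; apply: proj_ge => //.
  have := Hb k j i hji; have := SD k j i; have := Cbr k i j; rewrite /M; lia.
have E3 : forall k l j, E l j -> f k.+1 l j <= f k l j + C k j (inr l).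
  move=> k l j hl; rewrite Hf' //; apply: proj_le.
    have := SD k l j; lia.
  have := Hb k l j hl; have := Cr k j l; lia.
have I4 : forall k j i, E j i -> PD k j i + PI k j i <= f k j i - fp k j i.
  elim=> [|k IH] j i hji.
    rewrite /PD /PI !big_ord0; have [-> ->] := Hinit j i hji; lia.
  have e1 : f k j i + C k i (inr j) + \sum_(k0 < k.+1 | (k0 + dT k0 j i)%N == k) C k0 j (inl i)
      <= f k.+1 j i.
    rewrite Hf' //; apply: proj_ge => //.
    have := Hb k j i hji; have := SD k j i; have := Cbr k i j; rewrite /M; lia.
  have e2 : fp k.+1 j i <= fp k j i + C k j (inl i) + \sum_(k0 < k.+1 | (k0 + dH k0 j i)%N == k) C k0 i (inr j).
    rewrite Hfp' //; apply: proj_le => //.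
    have := SI k j i; have := Cbl k j i; have := Hb k j i hji; lia.
  have := PDrec k j i; have := PIrec k j i; have := IH j i hji; lia.
move=> k; apply/andP; split.
  by rewrite /imbalance; apply: sumr_ge0 => j _; apply: normr_ge0.
pose inj j := \sum_(i | E j i) Order.max (f k.+1 j i - f k j i) 0 + \sum_(l | E l j) Order.max (f k l j - f k.+1 l j) 0.
pose outj j := \sum_(i | E j i) Order.max (f k j i - f k.+1 j i) 0 + \sum_(l | E l j) Order.max (f k.+1 l j - f k l j) 0.
have Cl1 : forall j, balance E (f k.+1) j = balance E (f k) j + inj j - outj j.
  move=> j; rewrite /balance /inj /outj.
  rewrite (sum_decomp _ (fun i => f k j i) (fun i => f k.+1 j i)).
  rewrite (sum_decomp _ (fun l => f k l j) (fun l => f k.+1 l j)).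
  lia.
have Cl2 : \sum_j inj j = \sum_j outj j.
  rewrite /inj /outj !sumD_int.
  have := exch E (fun a b => Order.max (f k.+1 a b - f k a b) 0).
  have := exch E (fun a b => Order.max (f k a b - f k.+1 a b) 0).
  rewrite /= => h1 h2; rewrite h1 h2; exact: addrC.
have inge : forall j, 0 <= inj j.
  by move=> j; apply: addr_ge0; apply: sumr_ge0 => *; lia.
have outge : forall j, 0 <= outj j.
  by move=> j; apply: addr_ge0; apply: sumr_ge0 => *; lia.
have Cl3 : forall j, outj j <= Order.max (balance E (f k) j) 0.
  move=> j.
  have o1 : outj j <= \sum_(i | E j i) (PD k j i - C k j (inl i)) + \sum_(l | E l j) C k j (inr l).
    apply: lerD; apply: ler_sum.
      move=> i hji; have := E1 k j i hji; have := PDrec k j i; have := PDge k.+1 j i.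
      have := Cr k i j; have := SD k j i; lia.
    move=> l hl; have := E3 k l j hl; have := Cr k j l; lia.
  rewrite sumrB in o1.
  have bb : balance E (f k) j = pbalance E (f k) (fp k) j + (\sum_(i | E j i) f k j i - \sum_(i | E j i) fp k j i).
    rewrite /balance /pbalance; lia.
  have pdb : \sum_(i | E j i) PD k j i <= \sum_(i | E j i) f k j i - \sum_(i | E j i) fp k j i.
    rewrite -sumrB; apply: ler_sum => i hji; have := I4 k j i hji; have := PIge k j i; lia.
  set SL := \sum_(i | E j i) C k j (inl i) in o1 *.
  set SR := \sum_(l | E l j) C k j (inr l) in o1 *.
  set SPD := \sum_(i | E j i) PD k j i in o1 pdb *.
  case: (ltrP (pbalance E (f k) (fp k) j) 0) => hn.
    have hz := Hneg k j hn.
    have hh1 : \sum_(i | E j i) PD k j i = 0.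
      apply: big1 => i _; apply: big1 => k0 _; rewrite hz ?oppr0 //; exact: ltnW.
    have hh2 : scv E j (C k j) = 0.
      by rewrite /scv !big1 // => *; apply: hz.
    move: hh2; rewrite /scv -/SL -/SR; lia.
  have hs : scv E j (C k j) <= pbalance E (f k) (fp k) j.
    case: (ltrP 0 (pbalance E (f k) (fp k) j)) => hp; first exact: Csc.
    rewrite /scv !big1 // => *; apply: C0; lia.
  move: hs; rewrite /scv -/SL -/SR; lia.
have Cl4 : forall j, `|balance E (f k.+1) j| <= `|balance E (f k) j| + inj j - outj j.
  move=> j; have := Cl1 j; have := Cl3 j; have := inge j; have := outge j; lia.
rewrite /imbalance.
apply: (le_trans (ler_sum _ (fun j _ => Cl4 j))).
rewrite sumrB sumD_int Cl2 addrK; exact: lexx.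
Qed.
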